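(* Let $(\mathcal S,\mathcal A,P,r)$ be any finite MDP (general/multichain) and $(g^\star,h^\star)$ a solution of the modified Bellman equations. Let $V^0\in\mathbb R^n$, let $\lambda_{k+1}\le\lambda_k<1$ for $k\ge1$ with $\lim_k\lambda_k=0$, set $\lambda_0=1$, let $V^k=\lambda_kV^0+(1-\lambda_k)TV^{k-1}$ for $k\ge1$, and let $\pi_k$ be greedy policies, $T^{\pi_k}V^k=TV^k$. Then there exists an integer $K\ge0$ such that $\mathcal P^{\pi_k}g^\star=g^\star$ for all $k\ge K$; taking $K$ to be the minimal such integer, for every $k>K$, \[\|g^\star-g^{\pi_k}\|_\infty\le\|TV^k-V^k-g^\star\|_\infty\le2\Big(1-\sum_{i=1}^k\lambda_i\prod_{j=i}^k(1-\lambda_j)\Big)\|V^0-h^\star\|_\infty+2\prod_{j=K}^k(1-\lambda_j)\,\|g^\star\|_\infty.\]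
   Context: An MDP $(\mathcal S,\mathcal A,P,r)$ has finite state space $\mathcal S$ ($|\mathcal S|=n$, functions identified with $\mathbb R^n$), finite action space, transition probabilities $P(s'\mid s,a)$ and bounded reward $r$. For a policy $\pi$: $r^\pi(s)=\sum_a\pi(a\mid s)r(s,a)$, $\mathcal P^\pi(s,s')=\sum_a\pi(a\mid s)P(s'\mid s,a)$, $g^\pi(s)=\liminf_{T\to\infty}\frac1T\mathbb E_\pi[\sum_{t=0}^{T-1}r(s_t,a_t)\mid s_0=s]$, $g^\star=\max_\pi g^\pi$. $T^\pi V=r^\pi+\mathcal P^\pi V$, $(TV)(s)=\max_a\{r(s,a)+\sum_{s'}P(s'\mid s,a)V(s')\}$. A pair $(g,h)$ solves the modified Bellman equations if $\max_a\sum_{s'}P(s'\mid s,a)g(s')=g(s)$ and $\max_a\{r(s,a)+\sum_{s'}P(s'\mid s,a)h(s')\}=h(s)+g(s)$ for all $s$, with some policy attaining both maxima simultaneously; the first component of any solution equals $g^\star$. The convention $\lambda_0=1$ is the paper's. *)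

(* Defs.v *)
From HB Require Import structures.
From mathcomp Require Import all_boot all_order all_algebra.
From mathcomp Require Import all_classical all_reals all_analysis.
Set Implicit Arguments. Unset Strict Implicit. Unset Printing Implicit Defensive.
Import Order.TTheory GRing.Theory Num.Theory.
Local Open Scope ring_scope.

Section MDP.
Variables (R : realType) (S A : finType).

(* transition probabilities P s a s' = P(s'|s,a); vectors in R^n are S -> R *)
Definition is_kernel (P : S -> A -> S -> R) : Prop :=
  (forall s a s', 0 <= P s a s') /\ (forall s a, \sum_(s' : S) P s a s' = 1).

(* stationary (randomized) policy: pi s a = pi(a|s) *)
Definition is_policy (pi : S -> A -> R) : Prop :=
  (forall s a, 0 <= pi s a) /\ (forall s, \sum_(a : A) pi s a = 1).

(* maximum over the (nonempty, witnessed by a0) action space *)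
Definition maxA (a0 : A) (f : A -> R) : R := \big[Num.max/f a0]_(a : A) f a.

Definition rpi (r : S -> A -> R) (pi : S -> A -> R) : S -> R :=
  fun s => \sum_(a : A) pi s a * r s a.

Definition Ppi (P : S -> A -> S -> R) (pi : S -> A -> R) (V : S -> R) : S -> R :=
  fun s => \sum_(s' : S) (\sum_(a : A) pi s a * P s a s') * V s'.

Definition Tpi P r pi (V : S -> R) : S -> R := fun s => rpi r pi s + Ppi P pi V s.

Definition Tbell (a0 : A) (P : S -> A -> S -> R) (r : S -> A -> R) (V : S -> R)
  : S -> R :=
  fun s => maxA a0 (fun a => r s a + \sum_(s' : S) P s a s' * V s').

Definition supnorm (v : S -> R) : R := \big[Num.max/0]_(s : S) `|v s|.

(* average reward of a stationary policy:
   g^pi(s) = liminf_T (1/T) E_pi[sum_{t<T} r(s_t,a_t) | s_0 = s]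
           = liminf_T (1/T) sum_{t<T} ((P^pi)^t r^pi)(s)  (T = n+1 >= 1) *)
Definition gpi (P : S -> A -> S -> R) (r : S -> A -> R) (pi : S -> A -> R)
  (s : S) : R :=
  limn_inf (fun n : nat =>
    (n.+1%:R)^-1 * \sum_(t < n.+1) iter t (Ppi P pi) (rpi r pi) s).

Definition modified_bellman (a0 : A) (P : S -> A -> S -> R) (r : S -> A -> R)
  (g h : S -> R) : Prop :=
  (forall s, maxA a0 (fun a => \sum_(s' : S) P s a s' * g s') = g s) /\
  (forall s, Tbell a0 P r h s = h s + g s) /\
  (exists d : S -> A, forall s,
      \sum_(s' : S) P s (d s) s' * g s' = g s /\
      r s (d s) + \sum_(s' : S) P s (d s) s' * h s' = h s + g s).
End MDP.

(* Main.v *)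
Require Import Defs.
From HB Require Import structures.
From mathcomp Require Import all_boot all_order all_algebra.
From mathcomp Require Import all_classical all_reals all_analysis.
From mathcomp Require Import ring lra zify.
Import Order.TTheory GRing.Theory Num.Theory.
Local Open Scope classical_set_scope.
Local Open Scope ring_scope.
Set Implicit Arguments. Unset Strict Implicit. Unset Printing Implicit Defensive.
Lemma lo_cvg (R : realType) (c C : R) : (c - C * (n.+1%:R)^-1) @[n --> \oo] --> (c : R^o).
Proof.
have H : (fun n : nat => C * (n.+1%:R)^-1) @ \oo --> (C * 0 : R^o).
  exact: (cvgMl_tmp (a := C) (@cvg_harmonic R)).
rewrite mulr0 in H.
have := cvgB (cvg_cst (c : R^o)) H; rewrite subr0.
by move=> HH; exact: HH.
Qed.

Lemma limn_inf_le (R : realType) (u v : R^o^nat) : bounded_fun u -> bounded_fun v ->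
  (forall n, u n <= v n) -> limn_inf u <= limn_inf v.
Proof.
move=> bu bv uv.
have ab k : infs u k <= infs v k.
  apply: lb_le_inf; first by exists (v k); exists k => /=.
  move=> M [n /= kn <-]; apply: le_trans (uv n).
  apply: ge_inf; last by exists n.
  exact/has_lbound_sdrop/bounded_fun_has_lbound.
have cu : cvgn (infs u).
  apply: nondecreasing_is_cvgn; last exact: bounded_fun_has_ubound_infs.
  exact/nondecreasing_infs/bounded_fun_has_lbound.
have cv : cvgn (infs v).
  apply: nondecreasing_is_cvgn; last exact: bounded_fun_has_ubound_infs.
  exact/nondecreasing_infs/bounded_fun_has_lbound.
by apply: ler_lim => //; apply: nearW.
Qed.

Lemma bnd_of (R : realType) (u : R^o^nat) C : (forall n, `|u n| <= C) -> bounded_fun u.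
Proof.
move=> H; exists C; split; first exact: num_real.
by move=> M CM n _; exact: le_trans (H n) (ltW CM).
Qed.
Lemma inv_le1 (R : realType) (n : nat) : ((n.+1%:R : R)^-1) <= 1.
Proof. by rewrite invf_le1 // ?ler1n // ltr0n. Qed.
Lemma inv_gt0 (R : realType) (n : nat) : 0 < ((n.+1%:R : R)^-1).
Proof. by rewrite invr_gt0 ltr0n. Qed.
Lemma lo_bnd (R : realType) (c C : R) n : `|c - C * (n.+1%:R)^-1| <= `|c| + `|C|.
Proof.
apply: le_trans (ler_normB _ _) _; rewrite lerD2l normrM.
rewrite (ger0_norm (ltW (inv_gt0 R n))).
by rewrite -[X in _ <= X]mulr1 ler_wpM2l // inv_le1.
Qed.
Section Basic.
Variables (R : realType) (S A : finType).

Lemma le_maxA (a0 : A) (f : A -> R) a : f a <= Defs.maxA a0 f.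
Proof. exact: le_bigmax. Qed.

Lemma supnorm_ge (v : S -> R) s : `|v s| <= supnorm v.
Proof. exact: le_bigmax. Qed.

Lemma supnorm_le (v : S -> R) B : 0 <= B -> (forall s, `|v s| <= B) -> supnorm v <= B.
Proof. by move=> B0 H; apply: bigmax_le. Qed.

Lemma supnorm_ge0 (v : S -> R) : 0 <= supnorm v.
Proof. apply: bigmax_ge_id. Qed.

Definition Pw (w : S -> R) (V : S -> R) : R := \sum_s w s * V s.

Definition stoch (w : S -> R) := (forall s, 0 <= w s) /\ \sum_s w s = 1.

Lemma Pw_le w V B : stoch w -> (forall s, V s <= B) -> Pw w V <= B.
Proof.
case=> w0 w1 H; rewrite /Pw -[B]mul1r -w1 mulr_suml.
by apply: ler_sum => s _; rewrite ler_wpM2l.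
Qed.

Lemma Pw_ge w V B : stoch w -> (forall s, B <= V s) -> B <= Pw w V.
Proof.
case=> w0 w1 H; rewrite /Pw -[B]mul1r -w1 mulr_suml.
by apply: ler_sum => s _; rewrite ler_wpM2l.
Qed.

Lemma Pw_mono w U V : stoch w -> (forall s, U s <= V s) -> Pw w U <= Pw w V.
Proof. case=> w0 w1 H; apply: ler_sum => s _; exact: ler_wpM2l. Qed.

Lemma Pw_lin w U V a b : Pw w (fun s => a * U s + b * V s) = a * Pw w U + b * Pw w V.
Proof.
rewrite /Pw !mulr_sumr -big_split /=; apply: eq_bigr => s _; ring.
Qed.

Lemma Pw_cst w c : stoch w -> Pw w (fun _ => c) = c.
Proof. by case=> _ w1; rewrite /Pw -mulr_suml w1 mul1r. Qed.

Lemma Pw_norm w V B : stoch w -> (forall s, `|V s| <= B) -> `|Pw w V| <= B.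
Proof.
move=> sw H; rewrite ler_norml; apply/andP; split.
  by apply: Pw_ge => // s; have := H s; rewrite ler_norml => /andP[].
by apply: Pw_le => // s; have := H s; rewrite ler_norml => /andP[].
Qed.

End Basic.
Section Main.
Variables (R : realType) (S A : finType) (a0 : A) (P : S -> A -> S -> R)
  (r : S -> A -> R) (g h : S -> R) (lam : nat -> R) (V : nat -> S -> R)
  (pi : nat -> S -> A -> R) (d : S -> A).
Hypothesis HP : is_kernel P.
Hypothesis Hg : forall s, Defs.maxA a0 (fun a => \sum_(s' : S) P s a s' * g s') = g s.
Hypothesis Hh : forall s, Tbell a0 P r h s = h s + g s.
Hypothesis Hd : forall s, \sum_(s' : S) P s (d s) s' * g s' = g s /\
      r s (d s) + \sum_(s' : S) P s (d s) s' * h s' = h s + g s.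
Hypothesis Hl0 : lam 0%N = 1.
Hypothesis Hlm : forall k, (1 <= k)%N -> lam k.+1 <= lam k /\ lam k < 1.
Hypothesis Hlim : lam @ \oo --> 0.
Hypothesis HV : forall k, (1 <= k)%N ->
     V k = (fun s => lam k * V 0%N s + (1 - lam k) * Tbell a0 P r (V k.-1) s).
Hypothesis Hpi : forall k, is_policy (pi k) /\ Tpi P r (pi k) (V k) = Tbell a0 P r (V k).

Lemma stochP s a : stoch (P s a).
Proof. by case: HP => H1 H2; split. Qed.

Lemma stoch_pi (sg : S -> A -> R) s : is_policy sg ->
  stoch (fun s' => \sum_(a : A) sg s a * P s a s').
Proof.
case=> p0 p1; case: HP => P0 P1; split.
  by move=> s'; apply: sumr_ge0 => a _; apply: mulr_ge0.
rewrite exchange_big /= -(p1 s); apply: eq_bigr => a _.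
by rewrite -mulr_sumr P1 mulr1.
Qed.

Lemma Ppi_Pw sg W s : Ppi P sg W s = Pw (fun s' => \sum_(a : A) sg s a * P s a s') W.
Proof. by []. Qed.

Lemma Ppi_split sg W s : Ppi P sg W s = \sum_(a : A) sg s a * Pw (P s a) W.
Proof.
rewrite /Ppi /Pw; under eq_bigr do rewrite mulr_suml.
rewrite exchange_big /=; apply: eq_bigr => a _; rewrite mulr_sumr.
by apply: eq_bigr => s' _; rewrite mulrA.
Qed.

Lemma act_le_T a W s : r s a + Pw (P s a) W <= Tbell a0 P r W s.
Proof. exact: (le_maxA a0 (fun a => r s a + \sum_(s' : S) P s a s' * W s')). Qed.

Lemma pol_le_T sg W s : is_policy sg -> rpi r sg s + Ppi P sg W s <= Tbell a0 P r W s.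
Proof.
case=> p0 p1; rewrite Ppi_split /rpi -big_split /=.
rewrite -[Tbell _ _ _ _ _]mul1r -(p1 s) mulr_suml; apply: ler_sum => a _.
by rewrite -mulrDr ler_wpM2l // act_le_T.
Qed.

Lemma Pg_le s a : Pw (P s a) g <= g s.
Proof. rewrite -(Hg s); exact: (le_maxA a0 (fun a => \sum_(s' : S) P s a s' * g s')). Qed.

Lemma Ppig_le sg s : is_policy sg -> Ppi P sg g s <= g s.
Proof.
case=> p0 p1; rewrite Ppi_split -[g s]mul1r -(p1 s) mulr_suml.
by apply: ler_sum => a _; rewrite ler_wpM2l // Pg_le.
Qed.

Lemma rPh_le s a : r s a + Pw (P s a) h <= h s + g s.
Proof. by rewrite -Hh act_le_T. Qed.

Lemma Tgreedy k s : Tbell a0 P r (V k) s = rpi r (pi k) s + Ppi P (pi k) (V k) s.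
Proof. by case: (Hpi k) => _ <-. Qed.

Lemma pol k : is_policy (pi k). Proof. by case: (Hpi k). Qed.

Lemma lam_mono k n : (1 <= k)%N -> (k <= n)%N -> lam n <= lam k.
Proof.
move=> k1; elim: n => [|n IH]; first by rewrite leqn0 => /eqP kn; move: k1; rewrite kn.
rewrite leq_eqVlt => /orP[/eqP <- //|]; rewrite ltnS => kn.
exact: (le_trans (proj1 (@Hlm n (leq_trans k1 kn))) (IH kn)).
Qed.

Lemma lam_ge0 k : 0 <= lam k.
Proof.
case: k => [|k]; first by rewrite Hl0.
rewrite leNgt; apply/negP => lt0.
have e0 : 0 < - lam k.+1 by rewrite oppr_gt0.
move/cvgrPdist_lt: Hlim => /(_ _ e0) [N _ HN].
have := HN (maxn N k.+1) (leq_maxl _ _).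
rewrite sub0r normrN.
have : lam (maxn N k.+1) <= lam k.+1 by apply: lam_mono => //; exact: leq_maxr.
move=> le1 lt2.
have ln0 : lam (maxn N k.+1) < 0 by exact: le_lt_trans le1 lt0.
by move: lt2; rewrite ltr0_norm // ltrN2 ltNge le1.
Qed.

Lemma lam_le1 k : lam k <= 1.
Proof. by case: k => [|k]; [rewrite Hl0 | exact/ltW/(proj2 (@Hlm k.+1 isT))]. Qed.

Lemma lam_dec k : lam k.+1 <= lam k.
Proof. by case: k => [|k]; [rewrite Hl0 lam_le1 | exact: (proj1 (@Hlm k.+1 isT))]. Qed.

Fixpoint cc (k : nat) : R := if k is k'.+1 then (1 - lam k'.+1) * (cc k' + 1) else 0.

Lemma cc_ge0 k : 0 <= cc k.
Proof.
elim: k => [|k IH] //=; apply: mulr_ge0; last by rewrite addr_ge0.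
by rewrite subr_ge0 lam_le1.
Qed.

Lemma cc_inv k : lam k.+1 * (1 + cc k) <= 1.
Proof.
elim: k => [|k IH]; first by rewrite /= addr0 mulr1 lam_le1.
apply: le_trans (_ : lam k.+1 * (1 + cc k.+1) <= 1).
  by rewrite ler_wpM2r ?lam_dec // addr_ge0 // cc_ge0.
rewrite /= .
have l0 := lam_ge0 k.+1; have l1 := lam_le1 k.+1.
have c0 := cc_ge0 k.
have : 0 <= (1 - lam k.+1) * (1 - lam k.+1 * (1 + cc k)) by apply: mulr_ge0; rewrite subr_ge0.
nra.
Qed.

Lemma dcc k : 0 <= cc k.+1 - cc k <= 1.
Proof.
have h1 := cc_inv k; have h2 := lam_ge0 k.+1; have h3 := cc_ge0 k.
have h4 : 0 <= lam k.+1 * (1 + cc k) by apply: mulr_ge0 => //; rewrite addr_ge0.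
rewrite /=; apply/andP; split; nra.
Qed.

Lemma cc_mono k n : (k <= n)%N -> cc k <= cc n.
Proof.
elim: n => [|n IH]; first by rewrite leqn0 => /eqP ->.
rewrite leq_eqVlt => /orP[/eqP <- //|]; rewrite ltnS => kn.
have := dcc n; have := IH kn; move=> a /andP[b _]; lra.
Qed.

Lemma pol_avg (sg : S -> A -> R) s (F : A -> R) B : is_policy sg ->
  (forall a, F a <= B) -> \sum_(a : A) sg s a * F a <= B.
Proof.
case=> p0 p1 H; rewrite -[B]mul1r -(p1 s) mulr_suml.
by apply: ler_sum => a _; rewrite ler_wpM2l.
Qed.

Lemma pol_avg_ge (sg : S -> A -> R) s (F : A -> R) B : is_policy sg ->
  (forall a, B <= F a) -> B <= \sum_(a : A) sg s a * F a.
Proof.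
case=> p0 p1 H; rewrite -[B]mul1r -(p1 s) mulr_suml.
by apply: ler_sum => a _; rewrite ler_wpM2l.
Qed.

Lemma Pw_add3 (w U W X : S -> R) (c : R) :
  Pw w (fun s => U s + c * W s + X s) = Pw w U + c * Pw w W + Pw w X.
Proof.
rewrite /Pw !mulr_sumr -!big_split /=; apply: eq_bigr => s _; ring.
Qed.

Definition R0 := supnorm (fun s => V 0%N s - h s).
Definition xx k s := V k s - h s - cc k * g s.
Definition yy k s := Tbell a0 P r (V k) s - h s - (cc k + 1) * g s.

Lemma V_dec k : V k = (fun s => h s + cc k * g s + xx k s).
Proof. by apply: funext => s; rewrite /xx; ring. Qed.

Lemma x_rec k s : (1 <= k)%N -> xx k s = lam k * xx 0 s + (1 - lam k) * yy k.-1 s.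
Proof.
case: k => [//|k] _; rewrite /xx /yy (@HV k.+1 isT) /=; ring.
Qed.

Lemma y_le k s : yy k s <= Ppi P (pi k) (xx k) s.
Proof.
rewrite /yy Tgreedy {1}V_dec !Ppi_Pw Pw_add3 -!Ppi_Pw.
have h1 : rpi r (pi k) s + Ppi P (pi k) h s <= h s + g s.
  rewrite Ppi_split /rpi -big_split /=.
  under eq_bigr do rewrite -mulrDr.
  by apply: pol_avg; [exact: pol | exact: rPh_le].
have h2 : cc k * Ppi P (pi k) g s <= cc k * g s.
  by rewrite ler_wpM2l ?cc_ge0 // Ppig_le //; exact: pol.
lra.
Qed.

Lemma y_ge k s : Pw (P s (d s)) (xx k) <= yy k s.
Proof.
rewrite /yy; have := act_le_T (d s) (V k) s; rewrite {1}V_dec Pw_add3.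
case: (Hd s) => e1 e2; rewrite /Pw e1; rewrite /Pw in e2; lra.
Qed.

Lemma xy_bound k : (forall s, `|xx k s| <= R0) /\ (forall s, `|yy k s| <= R0).
Proof.
have yb k' : (forall s, `|xx k' s| <= R0) -> forall s, `|yy k' s| <= R0.
  move=> H s; have := y_le k' s; have := y_ge k' s.
  have := Pw_norm (stochP s (d s)) H; rewrite Ppi_Pw.
  have := Pw_norm (stoch_pi s (pol k')) H.
  rewrite !ler_norml => /andP[a1 a2] /andP[b1 b2] c1 c2; apply/andP; split; lra.
elim: k => [|k [IHx IHy]].
  have H : forall s, `|xx 0 s| <= R0.
    by move=> s; rewrite /xx /= mul0r subr0; exact: (supnorm_ge (fun s => V 0%N s - h s)).
  by split => //; apply: yb.
have H : forall s, `|xx k.+1 s| <= R0.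
  move=> s; rewrite x_rec //= .
  have l0 := lam_ge0 k.+1; have l1 := lam_le1 k.+1.
  have x0b : `|xx 0 s| <= R0.
    by rewrite /xx /= mul0r subr0; exact: (supnorm_ge (fun s => V 0%N s - h s)).
  have := IHy s; move: x0b; rewrite !ler_norml => /andP[a1 a2] /andP[b1 b2].
  apply/andP; split; nra.
by split => //; apply: yb.
Qed.


Lemma Pw_sub (w U W : S -> R) : Pw w (fun s => U s - W s) = Pw w U - Pw w W.
Proof. rewrite /Pw -sumrB; apply: eq_bigr => s _; ring. Qed.

Lemma Pw_zero (w : S -> R) (U : S -> R) : Pw w (fun s => U s - U s) = 0.
Proof. by rewrite Pw_sub subrr. Qed.

Definition ee k s := xx k s - xx k.-1 s.

Lemma Vdiff k j t s : Ppi P (pi t) (V k) s - Ppi P (pi t) (V j) s =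
  Ppi P (pi t) (fun s => xx k s - xx j s) s + (cc k - cc j) * Ppi P (pi t) g s.
Proof. rewrite !Ppi_Pw !V_dec !Pw_add3 Pw_sub; ring. Qed.

Lemma dy_up k s : yy k s - yy k.-1 s <= Ppi P (pi k) (ee k) s.
Proof.
case: k => [|k]; first by rewrite /ee /= subrr Ppi_Pw Pw_zero.
rewrite /yy [k.+1.-1]/=.
have h1 := pol_le_T (V k) s (pol k.+1).
have h2 := Tgreedy k.+1 s.
have h3 := Vdiff k.+1 k k.+1 s.
have h4 : (cc k.+1 - cc k) * Ppi P (pi k.+1) g s <= (cc k.+1 - cc k) * g s.
  rewrite ler_wpM2l //; last by apply: Ppig_le; exact: pol.
  by case/andP: (dcc k).
rewrite /ee [k.+1.-1]/=.
lra.
Qed.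

Lemma dy_lo k s : Ppi P (pi k.-1) (ee k) s - (cc k - cc k.-1) * (g s - Ppi P (pi k.-1) g s)
  <= yy k s - yy k.-1 s.
Proof.
case: k => [|k]; first by rewrite /ee /= !subrr Ppi_Pw Pw_zero mul0r subrr.
rewrite /yy [k.+1.-1]/=.
have h1 := pol_le_T (V k.+1) s (pol k).
have h2 := Tgreedy k s.
have h3 := Vdiff k.+1 k k s.
rewrite /ee [k.+1.-1]/=.
lra.
Qed.

Lemma e_rec k s : ee k.+1 s =
  (1 - lam k) * (yy k s - yy k.-1 s) + (lam k - lam k.+1) * (yy k s - xx 0 s).
Proof.
rewrite /ee /=; case: k => [|k].
  by rewrite x_rec //= Hl0; ring.
rewrite (x_rec s (isT : (1 <= k.+2)%N)) (x_rec s (isT : (1 <= k.+1)%N)) /=; ring.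
Qed.

Lemma D_eq k s : (1 <= k)%N ->
  Tbell a0 P r (V k) s - V k s - g s =
  lam k * (yy k s - xx 0 s) + (1 - lam k) * (yy k s - yy k.-1 s).
Proof.
move=> k1.
have -> : Tbell a0 P r (V k) s - V k s - g s = yy k s - xx k s by rewrite /yy /xx; ring.
rewrite (x_rec s k1); ring.
Qed.

Fixpoint uu k := if k is k'.+1 then (1 - lam k') * uu k' + 2 * R0 * (lam k' - lam k'.+1) else 0.

Lemma yx0 k s : -(2 * R0) <= yy k s - xx 0 s <= 2 * R0.
Proof.
have := (xy_bound k).2 s; have := (xy_bound 0).1 s.
rewrite !ler_norml => /andP[a1 a2] /andP[b1 b2]; apply/andP; split; lra.
Qed.

Lemma e_up k s : ee k s <= uu k.
Proof.
elim: k s => [|k IH] s; first by rewrite /ee /= subrr.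
rewrite e_rec /=.
have h1 : Ppi P (pi k) (ee k) s <= uu k by rewrite Ppi_Pw; apply: Pw_le; [exact: stoch_pi (pol k)|].
have h2 := dy_up k s.
have l0 : 0 <= 1 - lam k by rewrite subr_ge0 lam_le1.
have l1 : 0 <= lam k - lam k.+1 by rewrite subr_ge0 lam_dec.
have := yx0 k s => /andP[_ h3].
have : (1 - lam k) * (yy k s - yy k.-1 s) <= (1 - lam k) * uu k.
  by rewrite ler_wpM2l //; lra.
have : (lam k - lam k.+1) * (yy k s - xx 0 s) <= (lam k - lam k.+1) * (2 * R0).
  by rewrite ler_wpM2l.
lra.
Qed.

Section WithK.
Variable K : nat.
Hypothesis HK : forall j, (K <= j)%N -> Ppi P (pi j) g = g.

Definition mu k := if (K < k)%N then \prod_(K <= j < k) (1 - lam j) else 1.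

Lemma prod_01 m n : 0 <= \prod_(m <= j < n) (1 - lam j) <= 1.
Proof.
apply/andP; split.
  by apply: prodr_ge0 => j _; rewrite subr_ge0 lam_le1.
apply: prodr_ile1 => j _; apply/andP; split; first by rewrite subr_ge0 lam_le1.
by rewrite lerBlDr lerDl lam_ge0.
Qed.

Lemma mu_01 k : 0 <= mu k <= 1.
Proof. by rewrite /mu; case: ifP => _; [exact: prod_01 | rewrite ler01 lexx]. Qed.

Lemma mu_step1 k : (K <= k)%N -> (1 - lam k) * mu k <= mu k.+1.
Proof.
move=> Kk; rewrite /mu (_ : (K < k.+1)%N = true); last by rewrite ltnS.
rewrite big_nat_recr //=.
case: ltnP => Kk'.
  by rewrite mulrC.
have -> : K = k by lia.
by rewrite big_geq // mul1r mulr1.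
Qed.

Lemma mu_step2 k : (k <= K)%N -> 1 - lam k <= mu k.+1.
Proof.
move=> kK; rewrite /mu; case: ltnP => Kk.
  have -> : K = k by lia.
  by rewrite big_nat1.
by rewrite lerBlDr lerDl lam_ge0.
Qed.

Lemma mu_last k : (K < k)%N -> (1 - lam k) * mu k = \prod_(K <= j < k.+1) (1 - lam j).
Proof.
move=> Kk; rewrite /mu Kk big_nat_recr //=; last exact: ltnW.
by rewrite mulrC.
Qed.

Lemma e_lo k : exists G : S -> R, (forall s, - supnorm g <= G s <= g s) /\
  forall s, - uu k - mu k * (g s - G s) <= ee k s.
Proof.
elim: k => [|k [G [HG IH]]].
  exists g; split.
    move=> s; rewrite lexx andbT; have := supnorm_ge g s; rewrite ler_norml.
    by case/andP.
  by move=> s; rewrite /ee /= !subrr mulr0; lra.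
pose G' := Ppi P (pi k.-1) G.
have sw := stoch_pi _ (pol k.-1).
have HG' : forall s, - supnorm g <= G' s <= g s.
  move=> s; apply/andP; split.
    rewrite /G' Ppi_Pw; apply: Pw_ge => // s'; by case/andP: (HG s').
  apply: le_trans (Ppig_le s (pol k.-1)); rewrite /G' !Ppi_Pw.
  by apply: Pw_mono => // s'; case/andP: (HG s').
exists G'; split => // s.
have gG : 0 <= g s - G' s by case/andP: (HG' s) => _; rewrite subr_ge0.
have Pgg : Ppi P (pi k.-1) g s <= g s by apply: Ppig_le; exact: pol.
have PGPg : G' s <= Ppi P (pi k.-1) g s.
  by rewrite /G' !Ppi_Pw; apply: Pw_mono => // s'; case/andP: (HG s').
have Pe : - uu k - mu k * (Ppi P (pi k.-1) g s - G' s) <= Ppi P (pi k.-1) (ee k) s.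
  have -> : - uu k - mu k * (Ppi P (pi k.-1) g s - G' s) =
     Ppi P (pi k.-1) (fun s => - uu k - mu k * (g s - G s)) s.
    rewrite /G' !Ppi_Pw.
    have -> : (fun s => - uu k - mu k * (g s - G s)) =
              (fun s => (- uu k - mu k * g s) + mu k * G s) by apply: funext => x; ring.
    have -> : (fun s => (- uu k - mu k * g s) + mu k * G s) =
              (fun s => 1 * (- uu k - mu k * g s) + mu k * G s) by apply: funext => x; ring.
    rewrite Pw_lin.
    have -> : (fun s => - uu k - mu k * g s) = (fun s => (- uu k) * 1 + (- mu k) * g s)
      by apply: funext => x; ring.
    rewrite Pw_lin Pw_cst //; ring.
  by rewrite !Ppi_Pw; apply: Pw_mono => // s'; exact: IH.
have dy := dy_lo k s.
have l0 : 0 <= 1 - lam k by rewrite subr_ge0 lam_le1.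
have l1 : 0 <= lam k - lam k.+1 by rewrite subr_ge0 lam_dec.
have := yx0 k s => /andP[h3 _].
have h4 : (lam k - lam k.+1) * (- (2 * R0)) <= (lam k - lam k.+1) * (yy k s - xx 0 s).
  by rewrite ler_wpM2l.
rewrite e_rec /=.
have [mu0 mu1] := andP (mu_01 k).
have [dc0 dc1] := andP (dcc k.-1).
case: (leqP K k.-1) => Kk.
  have Pg := HK Kk.
  rewrite Pg subrr mulr0 subr0 in dy.
  rewrite Pg in Pe.
  have m1 : (1 - lam k) * mu k <= mu k.+1.
    by apply: mu_step1; apply: leq_trans Kk _; exact: leq_pred.
  have : (1 - lam k) * (- uu k - mu k * (g s - G' s)) <= (1 - lam k) * (yy k s - yy k.-1 s).
    by rewrite ler_wpM2l //; lra.
  have : (1 - lam k) * mu k * (g s - G' s) <= mu k.+1 * (g s - G' s) by rewrite ler_wpM2r.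
  lra.
have kK : (k <= K)%N by lia.
have m2 := mu_step2 kK.
have dcb : 0 <= cc k - cc k.-1 <= 1.
  by case: (k) => [|k'] /=; [rewrite subrr lexx ler01 | exact: dcc].
case/andP: dcb => dd0 dd1.
have e1 : mu k * (Ppi P (pi k.-1) g s - G' s) <= Ppi P (pi k.-1) g s - G' s.
  by rewrite -[X in _ <= X]mul1r ler_wpM2r // subr_ge0.
have e2 : (cc k - cc k.-1) * (g s - Ppi P (pi k.-1) g s) <= g s - Ppi P (pi k.-1) g s.
  by rewrite -[X in _ <= X]mul1r ler_wpM2r // subr_ge0.
have : (1 - lam k) * (- uu k - (g s - G' s)) <= (1 - lam k) * (yy k s - yy k.-1 s).
  by rewrite ler_wpM2l //; lra.
have : (1 - lam k) * (g s - G' s) <= mu k.+1 * (g s - G' s) by rewrite ler_wpM2r.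
lra.
Qed.

Lemma D_bound k s : (K < k)%N ->
  `|Tbell a0 P r (V k) s - V k s - g s| <=
  2 * R0 * lam k + (1 - lam k) * uu k + 2 * \prod_(K <= j < k.+1) (1 - lam j) * supnorm g.
Proof.
move=> Kk; have k1 : (1 <= k)%N by lia.
rewrite D_eq //.
have := yx0 k s => /andP[b1 b2].
have l0 := lam_ge0 k; have l1 : 0 <= 1 - lam k by rewrite subr_ge0 lam_le1.
have up1 := dy_up k s.
have up2 : Ppi P (pi k) (ee k) s <= uu k.
  by rewrite Ppi_Pw; apply: Pw_le; [exact: stoch_pi (pol k)| exact: e_up].
have [G [HG HGe]] := e_lo k.
have [mu0 mu1] := andP (mu_01 k).
have gn0 := supnorm_ge0 g.
have lo1 := dy_lo k s.
have Kk1 : (K <= k.-1)%N by lia.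
rewrite (HK Kk1) subrr mulr0 subr0 in lo1.
have lo2 : - uu k - mu k * (2 * supnorm g) <= Ppi P (pi k.-1) (ee k) s.
  rewrite Ppi_Pw; apply: Pw_ge; first exact: stoch_pi (pol k.-1).
  move=> s'; apply: le_trans (HGe s'); rewrite lerD2l lerN2 ler_wpM2l //.
  have := supnorm_ge g s'; rewrite ler_norml => /andP[_ c1].
  case/andP: (HG s') => c2 _; lra.
have ml := mu_last Kk.
set Pr := \prod_(K <= j < k.+1) (1 - lam j) in ml *.
have e1 : (1 - lam k) * (yy k s - yy k.-1 s) <= (1 - lam k) * uu k.
  by rewrite ler_wpM2l //; lra.
have e2 : (1 - lam k) * (- uu k - mu k * (2 * supnorm g)) <= (1 - lam k) * (yy k s - yy k.-1 s).
  by rewrite ler_wpM2l //; lra.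
have e3 : lam k * (yy k s - xx 0 s) <= lam k * (2 * R0) by rewrite ler_wpM2l.
have e4 : lam k * (- (2 * R0)) <= lam k * (yy k s - xx 0 s) by rewrite ler_wpM2l.
have e5 : (1 - lam k) * (- uu k - mu k * (2 * supnorm g)) =
   - ((1 - lam k) * uu k) - 2 * Pr * supnorm g by rewrite -ml; ring.
have Pr0 : 0 <= Pr by rewrite /Pr; case/andP: (prod_01 K k.+1).
have e6 : 0 <= 2 * Pr * supnorm g by rewrite mulr_ge0 // mulr_ge0.
rewrite ler_norml; apply/andP; split; lra.
Qed.

End WithK.

Definition Phi k := 1 - \sum_(1 <= i < k.+1) (lam i * \prod_(i <= j < k.+1) (1 - lam j)).

Lemma Phi_rec k : Phi k.+1 = (1 - lam k.+1) * Phi k + lam k.+1 ^+ 2.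
Proof.
rewrite /Phi big_nat_recr //= big_nat1.
rewrite (eq_big_nat _ _ (F2 := fun i => (lam i * \prod_(i <= j < k.+1) (1 - lam j)) * (1 - lam k.+1))); last first.
  move=> i /andP[_ ik]; rewrite big_nat_recr /=; [ring | lia].
rewrite -mulr_suml; ring.
Qed.

Lemma Phi_id k : 2 * R0 * lam k + (1 - lam k) * uu k = 2 * Phi k * R0.
Proof.
elim: k => [|k IH].
  by rewrite /Phi /= big_geq // Hl0; ring.
rewrite /= Phi_rec.
have -> : (1 - lam k) * uu k = 2 * Phi k * R0 - 2 * R0 * lam k by rewrite -IH; ring.
ring.
Qed.

Lemma support0 (sg : S -> A -> R) W s a : is_policy sg ->
  Tpi P r sg W s = Tbell a0 P r W s ->
  r s a + Pw (P s a) W < Tbell a0 P r W s -> sg s a = 0.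
Proof.
move=> [p0 p1] HT Hlt.
set T := Tbell a0 P r W s in HT Hlt *.
have E : \sum_(b : A) sg s b * (T - (r s b + Pw (P s b) W)) = 0.
  have -> : \sum_(b : A) sg s b * (T - (r s b + Pw (P s b) W)) =
     T * \sum_(b : A) sg s b - \sum_(b : A) sg s b * (r s b + Pw (P s b) W).
    rewrite mulr_sumr -sumrB; apply: eq_bigr => b _; ring.
  rewrite p1 mulr1 -HT /Tpi Ppi_split /rpi -big_split /=.
  by apply/eqP; rewrite subr_eq0; apply/eqP; apply: eq_bigr => b _; ring.
have nn : forall b, predT b -> 0 <= sg s b * (T - (r s b + Pw (P s b) W)).
  by move=> b _; rewrite mulr_ge0 // subr_ge0 /T act_le_T.
have := psumr_eq0P nn E (i:=a) isT.
move=> /eqP; rewrite mulf_eq0 => /orP[/eqP //|].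
by rewrite subr_eq0 => /eqP HH; move: Hlt; rewrite -HH ltxx.
Qed.

Lemma le_sum1 (I : finType) (F : I -> R) j : (forall i, 0 <= F i) -> F j <= \sum_i F i.
Proof. by move=> H; rewrite (bigD1 j) //= lerDl sumr_ge0. Qed.

Definition gam s a := g s - Pw (P s a) g.

Lemma gam_ge0 s a : 0 <= gam s a.
Proof. by rewrite /gam subr_ge0 Pg_le. Qed.

Lemma R0_ge0 : 0 <= R0.
Proof. exact: supnorm_ge0. Qed.

Lemma harm_of_cc k : (forall s a, 0 < gam s a -> 2 * R0 < cc k * gam s a) ->
  Ppi P (pi k) g = g.
Proof.
move=> Hc; apply: funext => s.
have Z : forall a, 0 < gam s a -> pi k s a = 0.
  move=> a ga; apply: (support0 (W := V k) (pol k)); first by case: (Hpi k) => _ ->.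
  have := act_le_T (d s) (V k) s.
  rewrite !V_dec !Pw_add3.
  have h1 := rPh_le s a.
  have := Pw_norm (stochP s a) (xy_bound k).1; rewrite ler_norml => /andP[_ h2].
  have := Pw_norm (stochP s (d s)) (xy_bound k).1; rewrite ler_norml => /andP[h3 _].
  case: (Hd s) => e1 e2; rewrite /Pw e1; rewrite /Pw in e2.
  have h4 := Hc s a ga; move: h4; rewrite /gam /Pw.
  move=> h4 h5; rewrite mulrBr in h4; rewrite /Pw in h1 h2 h3.
  lra.
rewrite Ppi_split.
have -> : g s = \sum_(a : A) pi k s a * g s.
  by rewrite -mulr_suml; case: (pol k) => _ ->; rewrite mul1r.
apply: eq_bigr => a _.
have := gam_ge0 s a; rewrite le_eqVlt => /orP[/eqP e|/Z ->]; last by rewrite !mul0r.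
by move: e; rewrite /gam => /eqP; rewrite eq_sym subr_eq0 => /eqP ->.
Qed.

Lemma cc_grow (M : R) : exists k0, forall k, (k0 <= k)%N -> M < cc k.
Proof.
wlog M0 : M / 0 <= M.
  move=> H; have [k0 Hk] := H `|M| (normr_ge0 _).
  by exists k0 => k /Hk; apply: le_lt_trans; exact: ler_norm.
have e0 : 0 < (2 * (M + 1))^-1 by rewrite invr_gt0; lra.
move/cvgrPdist_lt: Hlim => /(_ _ e0) [N _ HN].
have Hs : forall n, M < cc (N + n) \/ n%:R / 2 <= cc (N + n).
  elim=> [|n [IH|IH]].
    by right; rewrite mul0r addn0 cc_ge0.
    left; rewrite addnS; apply: lt_le_trans IH _; by case/andP: (dcc (N + n)); lra.
  case: (ltP M (cc (N + n))) => cM.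
    by left; rewrite addnS; apply: lt_le_trans cM _; case/andP: (dcc (N + n)); lra.
  right; rewrite addnS.
  have := HN (N + n).+1; rewrite sub0r normrN => /(_ _).
  move=> /(_ (leq_trans (leq_addr n N) (leqnSn _))) => ln.
  have l0 := lam_ge0 (N + n).+1.
  have ln' : lam (N + n).+1 < (2 * (M + 1))^-1 by rewrite -(ger0_norm l0).
  have c0 := cc_ge0 (N + n).
  have : lam (N + n).+1 * (1 + cc (N + n)) <= (2 * (M + 1))^-1 * (1 + M).
    by apply: ler_pM => //; [rewrite addr_ge0 | exact: ltW | rewrite lerD2l].
  have -> : (2 * (M + 1))^-1 * (1 + M) = 1 / 2.
    by field; lra.
  move=> hh.
  have -> : cc (N + n).+1 = (1 - lam (N + n).+1) * (cc (N + n) + 1) by [].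
  rewrite -natr1 mulrDl; nra.
exists (N + 2 * (Num.Def.trunc M).+1)%N => k Hk.
apply: lt_le_trans (cc_mono Hk).
case: (Hs (2 * (Num.Def.trunc M).+1)%N) => // H.
apply: lt_le_trans H; rewrite natrM mulrC mulrA mulVf ?mul1r; last by lra.
exact: truncnS_gt.
Qed.

Lemma harm_eventually : exists K0, forall k, (K0 <= k)%N -> Ppi P (pi k) g = g.
Proof.
pose F := fun s a => if (0 < gam s a) then (gam s a)^-1 else 0.
have F0 : forall s a, 0 <= F s a.
  by move=> s a; rewrite /F; case: ifP => // /ltW; rewrite invr_ge0.
pose M := 2 * R0 * \sum_s \sum_a F s a.
have [k0 Hk] := cc_grow M.
exists k0 => k /Hk Mk; apply: harm_of_cc => s a ga.
have FF : F s a <= \sum_s \sum_a F s a.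
  apply: le_trans (le_sum1 _ _) (le_sum1 _ _); first by move=> a'; apply: F0.
  by move=> s'; apply: sumr_ge0 => a' _; apply: F0.
have : 2 * R0 * F s a <= M by rewrite /M ler_wpM2l // mulr_ge0 // R0_ge0.
rewrite /F ga => h1.
have : 2 * R0 * (gam s a)^-1 < cc k by lra.
by rewrite -(ltr_pM2r ga) mulfVK // gt_eqF.
Qed.

Lemma Ppi_add sg (U W : S -> R) :
  Ppi P sg (fun s => U s + W s) = fun s => Ppi P sg U s + Ppi P sg W s.
Proof. by apply: funext => s /=; rewrite /Ppi -big_split /=; apply: eq_bigr => s' _; ring. Qed.

Lemma Ppi_sub sg (U W : S -> R) :
  Ppi P sg (fun s => U s - W s) = fun s => Ppi P sg U s - Ppi P sg W s.
Proof. by apply: funext => s /=; rewrite /Ppi -sumrB /=; apply: eq_bigr => s' _; ring. Qed.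

Lemma iter_add sg t (U W : S -> R) :
  iter t (Ppi P sg) (fun s => U s + W s) = fun s => iter t (Ppi P sg) U s + iter t (Ppi P sg) W s.
Proof. elim: t => [//|t IH]; by rewrite !iterS IH Ppi_add. Qed.

Lemma iter_sub sg t (U W : S -> R) :
  iter t (Ppi P sg) (fun s => U s - W s) = fun s => iter t (Ppi P sg) U s - iter t (Ppi P sg) W s.
Proof. elim: t => [//|t IH]; by rewrite !iterS IH Ppi_sub. Qed.

Lemma iter_harm sg t : Ppi P sg g = g -> iter t (Ppi P sg) g = g.
Proof. by move=> H; elim: t => [//|t IH]; rewrite iterS IH H. Qed.

Lemma iter_bnd sg t (f : S -> R) C : is_policy sg -> (forall s, `|f s| <= C) ->
  forall s, `|iter t (Ppi P sg) f s| <= C.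
Proof.
move=> ps H; elim: t => [//|t IH] s; rewrite iterS Ppi_Pw.
exact: Pw_norm (stoch_pi s ps) IH.
Qed.

Lemma telesc (F : nat -> R) N : \sum_(t < N) (F t - F t.+1) = F 0%N - F N.
Proof. elim: N => [|N IH]; first by rewrite big_ord0 subrr. by rewrite big_ord_recr /= IH; ring. Qed.

Lemma gpi_bound k s : Ppi P (pi k) g = g ->
  `|g s - gpi P r (pi k) s| <= supnorm (fun s => Tbell a0 P r (V k) s - V k s - g s).
Proof.
move=> hk.
set Dv := (fun s => Tbell a0 P r (V k) s - V k s - g s).
set eps := supnorm Dv.
set B := supnorm (V k).
have Dvb : forall s, `|Dv s| <= eps by move=> s'; exact: supnorm_ge.
have Vb : forall s, `|V k s| <= B by move=> s'; exact: supnorm_ge.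
have eps0 : 0 <= eps := supnorm_ge0 Dv.
have B0 : 0 <= B := supnorm_ge0 (V k).
have rpE : rpi r (pi k) = fun s => (V k s - (Ppi P (pi k)) (V k) s) + (g s + Dv s).
  by apply: funext => s' /=; rewrite /Dv Tgreedy ; ring.
have itE t : iter t (Ppi P (pi k)) (rpi r (pi k)) s =
    (iter t (Ppi P (pi k)) (V k) s - iter t.+1 (Ppi P (pi k)) (V k) s) + (g s + iter t (Ppi P (pi k)) Dv s).
  by rewrite rpE iter_add /= iter_sub /= iter_add /= iter_harm // -iterSr.
have sumE N : \sum_(t < N) iter t (Ppi P (pi k)) (rpi r (pi k)) s =
    (V k s - iter N (Ppi P (pi k)) (V k) s) + (N%:R * g s + \sum_(t < N) iter t (Ppi P (pi k)) Dv s).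
  elim: N => [|N IH]; first by rewrite !big_ord0 /= mul0r; ring.
  rewrite big_ord_recr [X in _ = _ + (_ + X)]big_ord_recr IH itE -natr1 /=; ring.
have itV N : `|V k s - iter N (Ppi P (pi k)) (V k) s| <= 2 * B.
  apply: le_trans (ler_normB _ _) _; have := Vb s; have := iter_bnd N (pol k) Vb s.
  lra.
have itD N : `|\sum_(t < N) iter t (Ppi P (pi k)) Dv s| <= N%:R * eps.
  elim: N => [|N IH]; first by rewrite big_ord0 normr0 mul0r.
  rewrite big_ord_recr /= -natr1 mulrDl mul1r; apply: le_trans (ler_normD _ _) _.
  by apply: lerD => //; exact: iter_bnd (pol k) Dvb s.
pose a := fun n : nat => (n.+1%:R)^-1 * \sum_(t < n.+1) iter t (Ppi P (pi k)) (rpi r (pi k)) s.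
have aE n : a n - g s = (n.+1%:R)^-1 * (V k s - iter n.+1 (Ppi P (pi k)) (V k) s)
                        + (n.+1%:R)^-1 * \sum_(t < n.+1) iter t (Ppi P (pi k)) Dv s.
  have Nn : (n.+1%:R : R) != 0 by rewrite pnatr_eq0.
  by rewrite /a sumE; field.
have aB n : `|a n - g s| <= eps + 2 * B * (n.+1%:R)^-1.
  rewrite aE; apply: le_trans (ler_normD _ _) _.
  rewrite !normrM (ger0_norm (ltW (inv_gt0 R n))).
  have h1 := ler_wpM2l (ltW (inv_gt0 R n)) (itV n.+1).
  have h2 := ler_wpM2l (ltW (inv_gt0 R n)) (itD n.+1).
  have h3 : (n.+1%:R)^-1 * (n.+1%:R * eps) = eps.
    by rewrite mulrA mulVf ?mul1r // pnatr_eq0.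
  move: h1 h2 h3; set iv := (n.+1%:R)^-1; set Nr := (n.+1%:R : R); lra.
have alo n : (g s - eps) - (2 * B) * (n.+1%:R)^-1 <= a n.
  have := aB n; set iv := (n.+1%:R)^-1; move: (a n) => an.
  rewrite ler_norml => /andP[h1 _]; lra.
have ahi n : a n <= (g s + eps) - (- (2 * B)) * (n.+1%:R)^-1.
  have := aB n; set iv := (n.+1%:R)^-1; move: (a n) => an.
  rewrite ler_norml => /andP[_ h1]; lra.
have ba : bounded_fun (a : R^o^nat).
  apply: (bnd_of (C := `|g s| + eps + 2 * B)) => n.
  have := aB n; have := inv_le1 R n; have := inv_gt0 R n.
  move=> i0 i1 hh.
  have : 2 * B * (n.+1%:R)^-1 <= 2 * B by rewrite -[X in _ <= X]mulr1 ler_wpM2l // mulr_ge0.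
  move=> h2; have h3 := ler_normD (a n - g s) (g s).
  rewrite subrK in h3; move: i0 i1 hh h2 h3; set iv := (n.+1%:R)^-1; move: (a n) => an.
  move=> *; lra.
have blo := bnd_of (fun n => lo_bnd (g s - eps) (2 * B) n).
have bhi := bnd_of (fun n => lo_bnd (g s + eps) (- (2 * B)) n).
have L1 := (cvg_limn_inf_sup (lo_cvg (c := g s - eps) (2 * B))).1.
have L2 := (cvg_limn_inf_sup (lo_cvg (c := g s + eps) (- (2 * B)))).1.
have G1 : g s - eps <= gpi P r (pi k) s.
  rewrite -L1; exact: limn_inf_le blo ba alo.
have G2 : gpi P r (pi k) s <= g s + eps.
  rewrite -L2; exact: limn_inf_le ba bhi ahi.
rewrite ler_norml; apply/andP; split; lra.
Qed.

Lemma uu_ge0 k : 0 <= uu k.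
Proof.
elim: k => [|k IH] /=; first by [].
apply: addr_ge0; first by apply: mulr_ge0 => //; rewrite subr_ge0 lam_le1.
by apply: mulr_ge0; [apply: mulr_ge0 => //; exact: R0_ge0 | rewrite subr_ge0 lam_dec].
Qed.

Lemma main_concl : exists K : nat,
    (forall k, (K <= k)%N -> Ppi P (pi k) g = g) /\
    (forall K', (K' < K)%N -> ~ (forall k, (K' <= k)%N -> Ppi P (pi k) g = g)) /\
    (forall k, (K < k)%N ->
       supnorm (fun s => g s - gpi P r (pi k) s)
         <= supnorm (fun s => Tbell a0 P r (V k) s - V k s - g s) /\
       supnorm (fun s => Tbell a0 P r (V k) s - V k s - g s)
         <= 2 * (1 - \sum_(1 <= i < k.+1) (lam i * \prod_(i <= j < k.+1) (1 - lam j)))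
              * supnorm (fun s => V 0%N s - h s)
            + 2 * (\prod_(K <= j < k.+1) (1 - lam j)) * supnorm g).
Proof.
have [K0 HK0] := harm_eventually.
pose Q := fun K => `[< forall k, (K <= k)%N -> Ppi P (pi k) g = g >].
have exQ : exists K, Q K by exists K0; apply/asboolP.
case: (ex_minnP exQ) => K /asboolP HK Kmin.
exists K; split => //; split.
  move=> K' K'K H; have := Kmin K' (asboolT H); rewrite leqNgt K'K //.
move=> k Kk; split.
  apply: supnorm_le; first exact: supnorm_ge0.
  move=> s; apply: gpi_bound; apply: HK; exact: ltnW.
apply: supnorm_le.
  apply: addr_ge0.
    rewrite -/(Phi k) -/R0 -Phi_id; apply: addr_ge0.
      by apply: mulr_ge0; [apply: mulr_ge0 => //; exact: R0_ge0 | exact: lam_ge0].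
    by apply: mulr_ge0; [rewrite subr_ge0 lam_le1 | exact: uu_ge0].
  apply: mulr_ge0; last exact: supnorm_ge0.
  by apply: mulr_ge0 => //; case/andP: (prod_01 K k.+1).
move=> s /=; rewrite -/(Phi k) -/R0 -Phi_id; exact: (D_bound HK s Kk).
Qed.

End Main.

Theorem theorem10 (R : realType) (S A : finType) (a0 : A)
  (P : S -> A -> S -> R) (r : S -> A -> R)
  (gstar hstar : S -> R)
  (lam : nat -> R) (V : nat -> S -> R) (pi : nat -> S -> A -> R) :
  is_kernel P ->
  modified_bellman a0 P r gstar hstar ->
  lam 0%N = 1 ->
  (forall k, (1 <= k)%N -> lam k.+1 <= lam k /\ lam k < 1) ->
  lam @ \oo --> 0 ->
  (forall k, (1 <= k)%N ->
     V k = (fun s => lam k * V 0%N s + (1 - lam k) * Tbell a0 P r (V k.-1) s)) ->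
  (forall k, is_policy (pi k) /\ Tpi P r (pi k) (V k) = Tbell a0 P r (V k)) ->
  exists K : nat,
    (forall k, (K <= k)%N -> Ppi P (pi k) gstar = gstar) /\
    (forall K', (K' < K)%N -> ~ (forall k, (K' <= k)%N -> Ppi P (pi k) gstar = gstar)) /\
    (forall k, (K < k)%N ->
       supnorm (fun s => gstar s - gpi P r (pi k) s)
         <= supnorm (fun s => Tbell a0 P r (V k) s - V k s - gstar s) /\
       supnorm (fun s => Tbell a0 P r (V k) s - V k s - gstar s)
         <= 2 * (1 - \sum_(1 <= i < k.+1) (lam i * \prod_(i <= j < k.+1) (1 - lam j)))
              * supnorm (fun s => V 0%N s - hstar s)
            + 2 * (\prod_(K <= j < k.+1) (1 - lam j)) * supnorm gstar).
Proof.
move=> HP [Hg [Hh [d Hd]]] Hl0 Hlm Hlim HV Hpi.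
exact: (main_concl HP Hg Hh Hd Hl0 Hlm Hlim HV Hpi).
Qed.
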